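(* Let $\mathcal{H}$ be a hypertree and $T$ a host tree of $\mathcal{H}$. Then $\mathcal{H}$ is a basic hypertree if and only if for every edge $uv$ of $T$ and every vertex $x\notin I_\mathcal{H}(uv)$ there exists a vertex $y$ such that some edge of $\mathcal{H}$ contains $\{u,v,y\}$ and no edge of $\mathcal{H}$ contains $\{x,y\}$. Equivalently, $\mathcal{H}$ is basic if and only if for every basic set $B$ of $\mathcal{H}$ and every vertex $x\notin B$ there exists a vertex $y$ such that some edge of $\mathcal{H}$ contains $B\cup\{y\}$ and no edge of $\mathcal{H}$ contains $\{x,y\}$.
   Context: A hypergraph $\mathcal{H}$ has a finite vertex set $V(\mathcal{H})$ and a finite family of nonempty subsets (edges). A host tree of $\mathcal{H}$ is a tree on $V(\mathcal{H})$ in which every edge induces a connected subgraph; a hypertree is a hypergraph with a host tree. Hypergraphs on the same vertex set are equivalent if they have the same host trees. $\mathcal{N}(\mathcal{H})$ is the hypergraph on $V(\mathcal{H})$ having, for each $v\in V(\mathcal{H})$, the edge equal to the union of all edges of $\mathcal{H}$ containing $v$. A basic hypertree is a hypertree $\mathcal{H}$ equivalent to $\mathcal{N}(\mathcal{H})$. For $V'\subseteq V(\mathcal{H})$, $I_\mathcal{H}(V')$ is the intersection of all edges containing $V'$, or $V(\mathcal{H})$ if none does; $I_\mathcal{H}(uv)=I_\mathcal{H}(\{u,v\})$. A union of sets is connected if the intersection graph of the sets is connected. $Comp(\mathcal{H})$ is the hypergraph without repeated edges on $V(\mathcal{H})$ whose edges are $V(\mathcal{H})$, all singletons, and all proper subsets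 obtainable from edges of $\mathcal{H}$ by repeated nonempty intersections and connected unions; a basic set of $\mathcal{H}$ is an edge of $Comp(\mathcal{H})$ with more than one vertex that is not a connected union of strictly smaller edges of $Comp(\mathcal{H})$. *)

(* Defs.v *)
From mathcomp Require Import all_boot.
Set Implicit Arguments. Unset Strict Implicit. Unset Printing Implicit Defensive.

(* A hypergraph on the finite vertex set V (= the whole finType) is given by
   its family of edges H : {set {set V}}. *)

Section Hyper.
Variable V : finType.

Definition simple_graph (e : rel V) : Prop :=
  (forall x y, e x y = e y x) /\ (forall x, ~~ e x x).

Definition graph_connected (e : rel V) : Prop := forall x y, connect e x y.

Definition acyclic (e : rel V) : Prop :=
  forall s : seq V, 2 < size s -> uniq s -> ~~ cycle e s.

Definition is_tree (e : rel V) : Prop :=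
  simple_graph e /\ graph_connected e /\ acyclic e.

Definition induced (e : rel V) (F : {set V}) : rel V :=
  [rel a b | [&& e a b, a \in F & b \in F]].

Definition induces_connected (e : rel V) (F : {set V}) : Prop :=
  forall x y, x \in F -> y \in F -> connect (induced e F) x y.

Definition host_tree (H : {set {set V}}) (e : rel V) : Prop :=
  is_tree e /\ forall F, F \in H -> induces_connected e F.

Definition hypertree (H : {set {set V}}) : Prop := exists e, host_tree H e.

Definition equivalent (H1 H2 : {set {set V}}) : Prop :=
  forall e : rel V, host_tree H1 e <-> host_tree H2 e.

Definition Nhyp (H : {set {set V}}) : {set {set V}} :=
  [set \bigcup_(F in H | v \in F) F | v : V].

Definition basic_hypertree (H : {set {set V}}) : Prop :=
  hypertree H /\ equivalent H (Nhyp H).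

(* I_H(S): intersection of all edges containing S; an empty \bigcap is
   [set: V], which is exactly the convention "V(H) if no edge contains S". *)
Definition IH (H : {set {set V}}) (S : {set V}) : {set V} :=
  \bigcap_(F in H | S \subset F) F.

Definition family_connected (P : {set {set V}}) : Prop :=
  forall A B, A \in P -> B \in P ->
    connect [rel X Y | [&& X \in P, Y \in P & X :&: Y != set0]] A B.

Inductive obtainable (H : {set {set V}}) : {set V} -> Prop :=
  | obt_edge F : F \in H -> obtainable H F
  | obt_int A B : obtainable H A -> obtainable H B -> A :&: B != set0 ->
      obtainable H (A :&: B)
  | obt_union (P : {set {set V}}) : P != set0 ->
      (forall A, A \in P -> obtainable H A) -> family_connected P ->
      obtainable H (cover P).

Definition comp_edge (H : {set {set V}}) (X : {set V}) : Prop :=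
  X = [set: V] \/ #|X| = 1 \/ (X \proper [set: V] /\ obtainable H X).

Definition basic_set (H : {set {set V}}) (B : {set V}) : Prop :=
  comp_edge H B /\ 1 < #|B| /\
  ~ (exists P : {set {set V}},
       [/\ P != set0, family_connected P, cover P = B &
           forall A, A \in P -> comp_edge H A /\ A \proper B]).

End Hyper.

(* Main.v *)
Require Import Defs.
From mathcomp Require Import all_boot.
From Stdlib Require Import Classical.
Set Implicit Arguments. Unset Strict Implicit. Unset Printing Implicit Defensive.

Lemma connect_closed_path (T : finType) (r : rel T) (Z : pred T) :
  (forall x y, Z x -> r x y -> Z y) -> forall x y, connect r x y -> Z x -> Z y.
Proof.
move=> cl x y /connectP [p pth ->]; elim: p x pth => [|z p IH] x //= /andP [rxz pth] Zx.
exact: IH pth (cl _ _ Zx rxz).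
Qed.

Lemma connect_map (A B : finType) (r : rel A) (r' : rel B) (f : A -> B) :
  (forall x y, r x y -> connect r' (f x) (f y)) ->
  forall x y, connect r x y -> connect r' (f x) (f y).
Proof.
move=> st x y /connectP [p pth ->]; elim: p x pth => [|z p IH] x /=; first by rewrite connect0.
case/andP=> rxz pth; exact: connect_trans (st _ _ rxz) (IH _ pth).
Qed.

Definition erem (V : finType) (e : rel V) (a b : V) : rel V :=
  [rel c d | e c d && ~~ (((c == a) && (d == b)) || ((c == b) && (d == a)))].
Definition side (V : finType) (e : rel V) (a b : V) : {set V} :=
  [set z | connect (erem e a b) a z].
Definition cc (V : finType) (e : rel V) (F : {set V}) :=
  forall a b p q, e a b -> p \in F -> q \in F -> p \in side e a b -> q \in side e b a -> a \in F.

Lemma eremE (V : finType) (e : rel V) a b c d :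
  erem e a b c d = e c d && ~~ (((c == a) && (d == b)) || ((c == b) && (d == a))).
Proof. by []. Qed.

Lemma eremC (V : finType) (e : rel V) a b : erem e a b =2 erem e b a.
Proof. by move=> c d; rewrite /erem /= orbC. Qed.

Lemma erem_sym (V : finType) (e : rel V) a b :
  (forall x y, e x y = e y x) -> symmetric (erem e a b).
Proof.
move=> es c d; rewrite !eremE es; congr (_ && ~~ _).
by case: (c == a); case: (c == b); case: (d == a); case: (d == b).
Qed.

Lemma side_refl (V : finType) (e : rel V) a b : a \in side e a b.
Proof. by rewrite inE connect0. Qed.

Lemma side_step (V : finType) (e : rel V) a b c d :
  c \in side e a b -> erem e a b c d -> d \in side e a b.
Proof. by rewrite !inE => ac cd; apply: connect_trans ac (connect1 cd). Qed.

Lemma path_rem_avoid (V : finType) (e : rel V) a b c s :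
  a \notin c :: s -> path e c s -> path (erem e a b) c s.
Proof.
elim: s c => [|z s IH] c //=; rewrite !inE negb_or => /andP [ac].
rewrite negb_or => /andP [az azs] /andP [ecz pth].
rewrite IH ?inE ?negb_or ?az // andbT eremE ecz /=.
by apply/negP; case/orP => /andP [/eqP h1 /eqP h2]; subst; rewrite eqxx in ac az.
Qed.


Lemma tree_sym (V : finType) (e : rel V) : is_tree e -> forall x y, e x y = e y x.
Proof. by case=> [[]]. Qed.
Lemma tree_irr (V : finType) (e : rel V) : is_tree e -> forall x, ~~ e x x.
Proof. by case=> [[]]. Qed.
Lemma tree_conn (V : finType) (e : rel V) : is_tree e -> forall x y, connect e x y.
Proof. by case=> _ []. Qed.
Lemma tree_acyc (V : finType) (e : rel V) : is_tree e -> acyclic e.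
Proof. by case=> _ []. Qed.

Lemma side_cut (V : finType) (e : rel V) a b : is_tree e -> e a b -> b \notin side e a b.
Proof.
move=> tr eab; rewrite inE; apply/negP => /connectP [p pth lst].
case/shortenP: pth lst => p' pth' up' _ lst'.
case: p' pth' up' lst' => [|z [|w s]] pth' up' lst'.
- by move: eab; rewrite /= in lst'; rewrite lst' (negbTE (tree_irr tr a)).
- by move: pth'; rewrite /= in lst'; rewrite -lst' /= eremE !eqxx /= !andbF.
- have := tree_acyc tr (s := a :: z :: w :: s) isT up'.
  rewrite /cycle rcons_path -lst' -(tree_sym tr) eab andbT.
  by rewrite (sub_path _ pth') // => x y /andP [].
Qed.

Lemma side_part (V : finType) (e : rel V) a b z : is_tree e -> e a b ->
  (z \in side e a b) || (z \in side e b a).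
Proof.
move=> tr eab.
apply: (connect_closed_path (Z := fun z => (z \in side e a b) || (z \in side e b a)))
  (tree_conn tr a z) _; last by rewrite side_refl.
move=> c d Zc ecd.
case cnd: (((c == a) && (d == b)) || ((c == b) && (d == a))).
- case/orP: cnd => /andP [_ /eqP ->]; by rewrite side_refl ?orbT.
- have r1 : erem e a b c d by rewrite eremE ecd cnd.
  have r2 : erem e b a c d by rewrite -eremC.
  by case/orP: Zc => Zc; [rewrite (side_step Zc r1) | rewrite (side_step Zc r2) orbT].
Qed.

Lemma side_disj (V : finType) (e : rel V) a b z : is_tree e -> e a b ->
  z \in side e a b -> z \in side e b a -> False.
Proof.
move=> tr eab; rewrite !inE => az bz.
have sy : connect_sym (erem e a b) by apply: sym_connect_sym; apply: erem_sym; apply: tree_sym.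
rewrite -(eq_connect (@eremC _ e a b)) in bz.
have := side_cut tr eab; rewrite inE (connect_trans az) //.
by rewrite sy.
Qed.

Lemma cc_both (V : finType) (e : rel V) F a b p q : is_tree e -> cc e F -> e a b ->
  p \in F -> q \in F -> p \in side e a b -> q \in side e b a -> (a \in F) && (b \in F).
Proof.
move=> tr cF eab pF qF ps qs; rewrite (cF a b p q) //=.
by apply: (cF b a q p); rewrite // (tree_sym tr).
Qed.

Lemma conn_cc (V : finType) (e : rel V) F : is_tree e -> induces_connected e F -> cc e F.
Proof.
move=> tr cF a b p q eab pF qF ps qs; apply/negPn/negP => aF.
suff : q \in side e a b by move/(side_disj tr eab); apply.
apply: (connect_closed_path (Z := mem (side e a b))) (cF p q pF qF) ps.
move=> c d cs; rewrite /induced /= => /and3P [ecd cF' dF]; apply: (side_step cs).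
rewrite eremE ecd /=; apply/negP; case/orP => /andP [/eqP ca /eqP db].
- by rewrite -ca cF' in aF.
- by rewrite -db dF in aF.
Qed.

Lemma cc_conn (V : finType) (e : rel V) F : is_tree e -> cc e F -> induces_connected e F.
Proof.
move=> tr cF x y xF yF; case/connectP: (tree_conn tr x y) => p pth lst.
case/shortenP: pth lst => p' pth' up' _ lst; subst y; clear p.
elim: p' x xF pth' up' yF => [|z s IH] x xF /=; first by rewrite connect0.
case/andP=> exz pth /andP [xn up] lF.
have zF : z \in F.
  have ys : last z s \in side e z x.
    rewrite inE; apply/connectP; exists s => //.
    by rewrite (eq_path (@eremC _ e z x)); apply: path_rem_avoid.
  have ezx : e z x by rewrite (tree_sym tr).
  exact: (cF z x (last z s) x ezx lF xF ys (side_refl e x z)).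
apply: connect_trans (IH z zF pth up lF); apply: connect1; by rewrite /induced /= exz xF zF.
Qed.

Lemma side_conn (V : finType) (e : rel V) a b : is_tree e -> induces_connected e (side e a b).
Proof.
move=> tr.
have key : forall c d, connect (erem e a b) c d -> c \in side e a b ->
    connect (induced e (side e a b)) c d.
  move=> c d /connectP [s pth ->]; elim: s c pth => [|z s IH] c /=; first by rewrite connect0.
  case/andP=> rcz pth cs; have zs := side_step cs rcz.
  apply: connect_trans (IH z pth zs); apply: connect1; rewrite /induced /= cs zs andbT.
  by rewrite andbT; rewrite eremE in rcz; case/andP: rcz.
have sy : connect_sym (induced e (side e a b)).
  apply: sym_connect_sym => c d; rewrite /induced /= (tree_sym tr); by case: (_ \in _); case: (_ \in _); rewrite ?andbF.
move=> z1 z2 z1s z2s.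
have h1 := key a z1 _ (side_refl e a b); have h2 := key a z2 _ (side_refl e a b).
rewrite !inE in z1s z2s.
by apply: connect_trans (h2 z2s); rewrite sy; apply: h1.
Qed.

Lemma cc_side (V : finType) (e : rel V) a b : is_tree e -> cc e (side e a b).
Proof. by move=> tr; apply: conn_cc => //; apply: side_conn. Qed.

Lemma cc_setI (V : finType) (e : rel V) F G : cc e F -> cc e G -> cc e (F :&: G).
Proof.
move=> cF cG a b p q eab /setIP [pF pG] /setIP [qF qG] ps qs.
by apply/setIP; split; [exact: (cF a b p q) | exact: (cG a b p q)].
Qed.

Lemma cc_setT (V : finType) (e : rel V) : cc e [set: V].
Proof. by move=> *; rewrite inE. Qed.

Lemma cc_small (V : finType) (e : rel V) (F : {set V}) : is_tree e -> #|F| <= 1 -> cc e F.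
Proof.
move=> tr /card_le1_eqP h a b p q eab pF qF ps qs.
by have epq := h p q pF qF; subst; case: (side_disj tr eab ps qs).
Qed.

Lemma fam_cc (V : finType) (e : rel V) (P : {set {set V}}) a b p q : is_tree e ->
  family_connected P -> (forall A, A \in P -> cc e A) -> e a b ->
  p \in cover P -> q \in cover P -> p \in side e a b -> q \in side e b a ->
  exists2 Z, Z \in P & (a \in Z) && (b \in Z).
Proof.
move=> tr fc ccP eab /bigcupP [A1 A1P pA1] /bigcupP [A2 A2P qA2] ps qs.
apply: NNPP => N.
have noZ : forall Z, Z \in P -> ~~ ((a \in Z) && (b \in Z)).
  by move=> Z ZP; apply/negP => h; apply: N; exists Z.
have cl : forall A B : {set V}, [exists z, (z \in A) && (z \in side e a b)] ->
   [rel X Y | [&& X \in P, Y \in P & X :&: Y != set0]] A B ->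
   [exists z, (z \in B) && (z \in side e a b)].
  move=> A B /existsP [z /andP [zA zs]] /and3P [AP BP /set0Pn [w]].
  rewrite inE => /andP [wA wB]; apply/existsP; exists w; rewrite wB /=.
  case/orP: (side_part w tr eab) => // ws.
  by have := noZ A AP; rewrite (cc_both tr (ccP A AP) eab zA wA zs ws).
have := connect_closed_path cl (fc A1 A2 A1P A2P).
case/(_ _)/existsP.
  by apply/existsP; exists p; rewrite pA1.
move=> z /andP [zA2 zs].
by have := noZ A2 A2P; rewrite (cc_both tr (ccP A2 A2P) eab zA2 qA2 zs qs).
Qed.

Lemma cover_cc (V : finType) (e : rel V) (P : {set {set V}}) : is_tree e ->
  family_connected P -> (forall A, A \in P -> cc e A) -> cc e (cover P).
Proof.
move=> tr fc ccP a b p q eab pP qP ps qs.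
case: (fam_cc tr fc ccP eab pP qP ps qs) => Z ZP /andP [aZ _].
by apply/bigcupP; exists Z.
Qed.

Lemma cut_acyclic (V : finType) (e : rel V) : symmetric e ->
  (forall a b, e a b -> ~~ connect (erem e a b) a b) -> acyclic e.
Proof.
move=> es cut s sz us; apply/negP => cyc.
case: s sz us cyc => [|a [|c1 [|w s3]]] // _.
set s'' := w :: s3.
rewrite cons_uniq => /andP [ac1 us]; move: (us); rewrite cons_uniq => /andP [c1n _].
have hp : path e a (c1 :: rcons s'' a) = e a c1 && path e c1 (rcons s'' a) by [].
rewrite /cycle rcons_cons hp rcons_path => /and3P [eac1 pth elast].
have := cut a c1 eac1; rewrite (sym_connect_sym (erem_sym a c1 es)).
move/negP; apply; apply/connectP; exists (rcons s'' a); last by rewrite last_rcons.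
rewrite rcons_path (@path_rem_avoid _ e a c1 c1 s'' ac1 pth) /=.
rewrite eremE elast /=; apply/negP; case/orP => /andP [/eqP h1 /eqP h2].
- by move: ac1; rewrite h2 inE eqxx.
- have hm : last w s3 \in w :: s3 := mem_last w s3.
  by rewrite h1 (negbTE c1n) in hm.
Qed.

Definition swap (V : finType) (e : rel V) (u v x : V) : rel V :=
  [rel c d | erem e u v c d || ((c == x) && (d == v)) || ((c == v) && (d == x))].

Lemma swapE (V : finType) (e : rel V) u v x c d : swap e u v x c d =
  erem e u v c d || ((c == x) && (d == v)) || ((c == v) && (d == x)).
Proof. by []. Qed.

Lemma swap_sym (V : finType) (e : rel V) u v x : is_tree e -> symmetric (swap e u v x).
Proof.
move=> tr c d; rewrite !swapE (erem_sym u v (tree_sym tr) c d).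
by case: (c == x); case: (d == v); case: (c == v); case: (d == x); rewrite ?orbT ?orbF.
Qed.

Lemma erem_e (V : finType) (e : rel V) a b c d : erem e a b c d -> e c d.
Proof. by rewrite eremE => /andP []. Qed.

Lemma swap_sub (V : finType) (e : rel V) u v x c d : erem e u v c d -> swap e u v x c d.
Proof. by rewrite swapE => ->. Qed.

Lemma swap_erem_xv (V : finType) (e : rel V) u v x c d :
  erem (swap e u v x) x v c d || erem (swap e u v x) v x c d -> erem e u v c d.
Proof.
rewrite !(eremE (swap e u v x)) swapE.
by case: (erem e u v c d); case: (c == x); case: (d == v); case: (c == v); case: (d == x).
Qed.

Lemma swap_cut_T (V : finType) (e : rel V) u v x a b : is_tree e -> e u v ->
  x \in side e u v -> erem e u v a b -> x \in side e a b -> v \in side e b a ->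
  ~~ connect (erem (swap e u v x) a b) a b.
Proof.
move=> tr euv xU r xA vB; have eab := erem_e r.
apply/negP => C.
have Z : (b \in side e a b) || (b \in side e v u).
  apply: (connect_closed_path (Z := fun z => (z \in side e a b) || (z \in side e v u))) C _;
    last by rewrite side_refl.
  move=> c d Zc; rewrite eremE swapE => /andP [Scd ncab].
  case/orP: Scd => [/orP [r' | /andP [_ /eqP ->]] | /andP [_ /eqP ->]].
  - case/orP: Zc => [cA | cW].
    + apply/orP; left; apply: (side_step cA); by rewrite eremE ncab (erem_e r').
    + apply/orP; right; apply: (side_step cW); by rewrite -eremC.
  - by rewrite side_refl orbT.
  - by rewrite xA.
have uB : u \in side e b a.
  apply: (side_step vB); move: r; rewrite !eremE [e v u](tree_sym tr) euv => /andP [_ n] /=.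
  by apply: contra n; case/orP => /andP [/eqP -> /eqP ->]; rewrite !eqxx ?orbT.
have /andP [_ bU] := cc_both tr (@cc_side _ e u v tr) eab xU (side_refl e u v) xA uB.
case/orP: Z => [bA | bW].
- by move: (side_cut tr eab); rewrite bA.
- exact: (side_disj tr euv bU bW).
Qed.

Lemma swap_cut (V : finType) (e : rel V) u v x a b : is_tree e -> e u v ->
  x \in side e u v -> swap e u v x a b -> ~~ connect (erem (swap e u v x) a b) a b.
Proof.
move=> tr euv xU; rewrite swapE; case/orP => [/orP [r | /andP [/eqP ea /eqP eb]] | /andP [/eqP ea /eqP eb]].
- have eab := erem_e r.
  have closA : (x \in side e a b) = (v \in side e a b) ->
      ~~ connect (erem (swap e u v x) a b) a b.
    move=> xvA; apply/negP => C; move: (side_cut tr eab); apply/negP/negPn.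
    apply: (connect_closed_path (Z := mem (side e a b))) C (side_refl e a b).
    move=> c d /= cA; rewrite eremE swapE => /andP [Scd ncab].
    case/orP: Scd => [/orP [r' | /andP [/eqP ec /eqP ed]] | /andP [/eqP ec /eqP ed]].
    + apply: (side_step cA); by rewrite eremE ncab (erem_e r').
    + by subst; rewrite -xvA.
    + by subst; rewrite xvA.
  case: (boolP (x \in side e a b)) => xA; case: (boolP (v \in side e a b)) => vA.
  + by apply: closA; rewrite xA vA.
  + have vB : v \in side e b a by case/orP: (side_part v tr eab) => //; rewrite (negbTE vA).
    exact: swap_cut_T.
  + have xB : x \in side e b a by case/orP: (side_part x tr eab) => //; rewrite (negbTE xA).
    have r' : erem e u v b a by rewrite erem_sym //; apply: tree_sym.
    have := swap_cut_T tr euv xU r' xB vA.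
    rewrite (eq_connect (@eremC _ _ b a)).
    by rewrite (sym_connect_sym (erem_sym a b (swap_sym u v x tr))).
  + by apply: closA; rewrite (negbTE xA) (negbTE vA).
- apply/negP => C; rewrite ea eb in C.
  have : v \in side e u v.
    apply: (connect_closed_path (Z := fun z => z \in side e u v)) C xU.
    move=> c d cU h; apply: (side_step cU); apply: (swap_erem_xv (x := x)); by rewrite h.
  by apply/negP; apply: side_cut.
- apply/negP => C; rewrite ea eb in C.
  have : x \in side e v u.
    apply: (connect_closed_path (Z := fun z => z \in side e v u)) C (side_refl e v u).
    move=> c d cW h; apply: (side_step cW); rewrite -eremC; apply: (swap_erem_xv (x := x)).
    by rewrite h orbT.
  by move=> xW; apply: (side_disj tr euv xU xW).
Qed.

Lemma swap_tree (V : finType) (e : rel V) u v x : is_tree e -> e u v ->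
  x \in side e u v -> is_tree (swap e u v x).
Proof.
move=> tr euv xU.
have vU : v \notin side e u v by apply: side_cut.
have xv : x != v by apply/negP => /eqP h; move: vU; rewrite -{1}h xU.
split; [split|split].
- exact: swap_sym.
- move=> c; rewrite swapE eremE (negbTE (tree_irr tr c)) /=.
  by apply/negP; case/orP => /andP [/eqP h1 /eqP h2]; move: xv; rewrite -h1 -h2 eqxx.
- have hU : forall z, z \in side e u v -> connect (swap e u v x) u z.
    move=> z; rewrite inE; apply: connect_sub => c d h; apply: connect1; exact: swap_sub.
  have hW : forall z, z \in side e v u -> connect (swap e u v x) v z.
    move=> z; rewrite inE; apply: connect_sub => c d h; apply: connect1; apply: swap_sub.
    by rewrite eremC.
  have sy := sym_connect_sym (swap_sym u v x tr).
  have hall : forall z, connect (swap e u v x) u z.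
    move=> z; case/orP: (side_part z tr euv) => [zU | zW]; first exact: hU.
    apply: connect_trans (hU x xU) _; apply: connect_trans (hW z zW).
    by apply: connect1; rewrite swapE eqxx eqxx orbT.
  by move=> c d; apply: connect_trans (hall d); rewrite sy.
- apply: cut_acyclic; first exact: swap_sym.
  by move=> a b; apply: swap_cut.
Qed.

Lemma induced_sym (V : finType) (e : rel V) (F : {set V}) :
  symmetric e -> connect_sym (induced e F).
Proof.
move=> es; apply: sym_connect_sym => c d; rewrite /induced /= es.
by case: (c \in F); case: (d \in F); rewrite ?andbF.
Qed.

Lemma swap_ind_conn (V : finType) (e : rel V) u v x (F : {set V}) : is_tree e -> e u v ->
  x \in side e u v -> induces_connected e F -> (u \in F -> v \in F -> x \in F) ->
  induces_connected (swap e u v x) F.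
Proof.
move=> tr euv xU cF hx.
have vU : v \notin side e u v := side_cut tr euv.
have evu : e v u by rewrite (tree_sym tr).
have uW : u \notin side e v u := side_cut tr evu.
have ccF := conn_cc tr cF.
have gen : forall Y : {set V}, cc e Y -> (u \notin Y) || (v \notin Y) ->
   forall z1 z2, z1 \in F :&: Y -> z2 \in F :&: Y -> connect (induced (swap e u v x) F) z1 z2.
  move=> Y ccY hY z1 z2 h1 h2.
  have cI := cc_conn tr (cc_setI ccF ccY) h1 h2.
  apply: connect_sub cI => c d; rewrite /induced /= => /and3P [ecd cI1 dI1]; apply: connect1.
  move: cI1 dI1; rewrite !inE => /andP [cF' cY] /andP [dF dY].
  have r : erem e u v c d.
    rewrite eremE ecd /=.
    apply/negP; case/orP => /andP [/eqP h3 /eqP h4]; rewrite h3 in cY; rewrite h4 in dY;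
      by rewrite cY dY in hY.
  by apply/and3P; split => //; apply: swap_sub.
have inU := gen _ (@cc_side _ e u v tr) ltac:(by rewrite vU orbT).
have inW := gen _ (@cc_side _ e v u tr) ltac:(by rewrite uW).
have sy := induced_sym F (swap_sym u v x tr).
have cross : forall z1 z2, z1 \in F :&: side e u v -> z2 \in F :&: side e v u ->
    connect (induced (swap e u v x) F) z1 z2.
  move=> z1 z2 h1 h2; move: (h1) (h2) => /setIP [z1F z1U] /setIP [z2F z2W].
  have /andP [uF vF] := cc_both tr ccF euv z1F z2F z1U z2W.
  have xF := hx uF vF.
  apply: connect_trans (inU z1 x h1 _) _; first by rewrite inE xF xU.
  apply: connect_trans (inW v z2 _ h2); last by rewrite inE vF side_refl.
  by apply: connect1; rewrite /induced /= xF vF swapE !eqxx orbT.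
move=> z1 z2 z1F z2F.
case/orP: (side_part z1 tr euv) => h1; case/orP: (side_part z2 tr euv) => h2.
- by apply: inU; rewrite inE ?z1F ?z2F.
- by apply: cross; rewrite inE ?z1F ?z2F.
- by rewrite sy; apply: cross; rewrite inE ?z1F ?z2F.
- by apply: inW; rewrite inE ?z1F ?z2F.
Qed.

Lemma swap_not_conn (V : finType) (e : rel V) u v x (F : {set V}) : is_tree e -> e u v ->
  x \in side e u v -> u \in F -> v \in F -> x \notin F ->
  ~~ connect (induced (swap e u v x) F) u v.
Proof.
move=> tr euv xU uF vF xF; apply/negP => C.
have : v \in side e u v.
  apply: (connect_closed_path (Z := fun z => z \in side e u v)) C (side_refl e u v).
  move=> c d cU; rewrite /induced /= swapE => /and3P [Scd cF dF].
  case/orP: Scd => [/orP [r | /andP [/eqP h1 _]] | /andP [_ /eqP h2]].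
  - exact: side_step cU r.
  - by rewrite h1 (negbTE xF) in cF.
  - by rewrite h2 (negbTE xF) in dF.
by apply/negP; apply: side_cut.
Qed.

Definition Nset (V : finType) (H : {set {set V}}) (y : V) : {set V} :=
  \bigcup_(F in H | y \in F) F.

Lemma NsetP (V : finType) (H : {set {set V}}) y z :
  reflect (exists2 F, F \in H & (y \in F) && (z \in F)) (z \in Nset H y).
Proof.
apply: (iffP bigcupP) => [[F /andP [FH yF] zF] | [F FH /andP [yF zF]]]; exists F => //.
- by rewrite yF zF.
- by rewrite FH yF.
Qed.

Lemma NhypP (V : finType) (H : {set {set V}}) A : A \in Nhyp H -> exists y, A = Nset H y.
Proof. by case/imsetP => y _ ->; exists y. Qed.

Lemma Nhyp_mem (V : finType) (H : {set {set V}}) y : Nset H y \in Nhyp H.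
Proof. by apply: (imset_f (fun v => Nset H v)). Qed.

Lemma host_cc (V : finType) (H : {set {set V}}) e (F : {set V}) : host_tree H e -> F \in H -> cc e F.
Proof. by case=> tr h FH; apply: conn_cc tr (h F FH). Qed.

Lemma N_cc (V : finType) (H : {set {set V}}) e y : is_tree e ->
  (forall F, F \in H -> cc e F) -> cc e (Nset H y).
Proof.
move=> tr ccH a b p q eab /NsetP [G1 G1H /andP [yG1 pG1]] /NsetP [G2 G2H /andP [yG2 qG2]] ps qs.
apply/NsetP; case/orP: (side_part y tr eab) => ys.
- by exists G2 => //; rewrite yG2 (ccH G2 G2H a b y q eab yG2 qG2 ys qs).
- by exists G1 => //; rewrite yG1 (ccH G1 G1H a b p y eab pG1 yG1 ps ys).
Qed.

Lemma host_N (V : finType) (H : {set {set V}}) e : host_tree H e -> host_tree (Nhyp H) e.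
Proof.
move=> [tr h]; split; first exact: tr.
move=> A /NhypP [y ->]; apply: (cc_conn tr); apply: (N_cc tr) => F FH.
exact: conn_cc tr (h F FH).
Qed.

Lemma basicE (V : finType) (H : {set {set V}}) : hypertree H ->
  (basic_hypertree H <-> forall S, host_tree (Nhyp H) S -> host_tree H S).
Proof.
move=> hh; split; first by case=> _ eqv S hS; apply/eqv.
by move=> h; split=> // e; split; [apply: host_N | apply: h].
Qed.

Lemma LX (V : finType) (H : {set {set V}}) S (X : {set V}) : is_tree S ->
  (forall y, cc S (Nset H y)) ->
  (forall a, a \notin X -> exists y, X \subset Nset H y /\ a \notin Nset H y) -> cc S X.
Proof.
move=> tr ccN h a b p q eab pX qX ps qs; apply/negPn/negP => aX.
case: (h a aX) => y [sub naN].
have := ccN y a b p q eab (subsetP sub p pX) (subsetP sub q qX) ps qs.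
by rewrite (negbTE naN).
Qed.

Lemma sub2 (V : finType) (x y : V) (F : {set V}) : ([set x; y] \subset F) = (x \in F) && (y \in F).
Proof. by rewrite subUset !sub1set. Qed.

Lemma sub3 (V : finType) (u v y : V) (F : {set V}) :
  ([set u; v; y] \subset F) = [&& u \in F, v \in F & y \in F].
Proof. by rewrite !subUset !sub1set andbA. Qed.

Lemma IH_mem (V : finType) (H : {set {set V}}) u v :
  (u \in IH H [set u; v]) && (v \in IH H [set u; v]).
Proof.
by apply/andP; split; apply/bigcapP => F /andP [_]; rewrite sub2 => /andP [].
Qed.

Lemma IH_sub (V : finType) (H : {set {set V}}) u v (F : {set V}) : F \in H -> u \in F -> v \in F ->
  IH H [set u; v] \subset F.
Proof. by move=> FH uF vF; apply: bigcap_inf; rewrite FH sub2 uF vF. Qed.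

Lemma IH_notin (V : finType) (H : {set {set V}}) u v x : x \notin IH H [set u; v] ->
  exists2 F, F \in H & [&& u \in F, v \in F & x \notin F].
Proof.
move=> h; apply: NNPP => N; move/negP: h; apply; apply/bigcapP => F /andP [FH].
rewrite sub2 => /andP [uF vF]; apply/negPn/negP => xF; apply: N; exists F => //.
by rewrite uF vF xF.
Qed.

Lemma IH_obt (V : finType) (H : {set {set V}}) u v :
  IH H [set u; v] \proper [set: V] -> obtainable H (IH H [set u; v]).
Proof.
move=> pr.
have [F FH /andP [uF vF]] : exists2 F, F \in H & (u \in F) && (v \in F).
  apply: NNPP => N; move: pr; rewrite properT => /negP; apply; apply/eqP/setP => z.
  rewrite inE; apply/bigcapP => F /andP [FH]; rewrite sub2 => /andP [uF vF].
  by case: N; exists F => //; rewrite uF.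
have : IH H [set u; v] = [set: V] \/ (obtainable H (IH H [set u; v]) /\ u \in IH H [set u; v]).
  rewrite /IH; apply: (big_ind (fun X => X = [set: V] \/ (obtainable H X /\ u \in X))).
  - by left.
  - move=> X Y [-> | [oX uX]] [-> | [oY uY]]; rewrite ?setTI ?setIT; try by [left | right].
    right; split; last by rewrite inE uX uY.
    by apply: obt_int => //; apply/set0Pn; exists u; rewrite inE uX uY.
  - move=> G /andP [GH]; rewrite sub2 => /andP [uG _]; right; split => //; exact: obt_edge.
case=> [eT | [] //]; move: pr; by rewrite eT properT eqxx.
Qed.

Definition PX (V : finType) (T : rel V) (H : {set {set V}}) (X : {set V}) : {set {set V}} :=
  [set A | [exists u, exists v, [&& T u v, u \in X, v \in X & A == IH H [set u; v]]]
        || [exists z, (z \in X) && (A == [set z])]].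

Lemma PXP (V : finType) (T : rel V) (H : {set {set V}}) (X : {set V}) A : A \in PX T H X ->
  (exists u v, [/\ T u v, u \in X, v \in X & A = IH H [set u; v]]) \/ (exists2 z, z \in X & A = [set z]).
Proof.
rewrite inE => /orP [/existsP [u /existsP [v /and4P [? ? ? /eqP ->]]] | /existsP [z /andP [zX /eqP ->]]].
- by left; exists u, v.
- by right; exists z.
Qed.

Lemma PX_sing (V : finType) (T : rel V) (H : {set {set V}}) (X : {set V}) z : z \in X -> [set z] \in PX T H X.
Proof. by move=> zX; rewrite inE; apply/orP; right; apply/existsP; exists z; rewrite zX eqxx. Qed.

Lemma PX_IH (V : finType) (T : rel V) (H : {set {set V}}) (X : {set V}) u v : T u v -> u \in X -> v \in X ->
  IH H [set u; v] \in PX T H X.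
Proof.
move=> Tuv uX vX; rewrite inE; apply/orP; left; apply/existsP; exists u; apply/existsP; exists v.
by rewrite Tuv uX vX eqxx.
Qed.

Lemma PX_cover (V : finType) (T : rel V) (H : {set {set V}}) (X : {set V}) :
  (forall u v, T u v -> u \in X -> v \in X -> IH H [set u; v] \subset X) -> cover (PX T H X) = X.
Proof.
move=> h; apply/setP => z; apply/bigcupP/idP => [[A /PXP [[u [v [Tuv uX vX ->]]] | [w wX ->]] zA] | zX].
- exact: subsetP (h u v Tuv uX vX) z zA.
- by rewrite inE in zA; rewrite (eqP zA).
- by exists [set z]; [rewrite PX_sing | rewrite inE].
Qed.

Lemma PX_conn (V : finType) (T : rel V) (H : {set {set V}}) (X : {set V}) : symmetric T ->
  induces_connected T X -> family_connected (PX T H X).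
Proof.
move=> Ts cX A B AP BP.
set R := [rel Y Z | [&& Y \in PX T H X, Z \in PX T H X & Y :&: Z != set0]].
have Rsym : connect_sym R.
  apply: sym_connect_sym => Y Z /=; rewrite setIC.
  by case: (Y \in _); case: (Z \in _).
have toS : forall A, A \in PX T H X -> exists2 z, z \in X & connect R A [set z].
  move=> A0 A0P; case/PXP: (A0P) => [[u [v [Tuv uX vX eA]]] | [z zX eA]].
  - exists u => //; apply: connect1; rewrite /= A0P PX_sing //=.
    by apply/set0Pn; exists u; rewrite eA !inE eqxx andbT; case/andP: (IH_mem H u v).
  - by exists z => //; rewrite eA connect0.
have ss : forall z1 z2, connect (induced T X) z1 z2 -> connect R [set z1] [set z2].
  apply: (connect_map (f := fun z => [set z])) => c d; rewrite /induced /= => /and3P [Tcd cX' dX].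
  apply: (connect_trans (y := IH H [set c; d])); apply: connect1;
    rewrite /= PX_sing ?PX_IH //=; apply/set0Pn.
  - by exists c; rewrite !inE eqxx /=; case/andP: (IH_mem H c d).
  - by exists d; rewrite !inE eqxx andbT; case/andP: (IH_mem H c d).
case: (toS A AP) => z1 z1X h1; case: (toS B BP) => z2 z2X h2.
apply: connect_trans h1 _; apply: connect_trans (ss z1 z2 (cX z1 z2 z1X z2X)) _.
by rewrite Rsym.
Qed.

Definition C1 (V : finType) (H : {set {set V}}) (T : rel V) :=
  forall u v, T u v -> forall x, x \notin IH H [set u; v] ->
        exists y, (exists2 F, F \in H & [set u; v; y] \subset F) /\
                  (forall F, F \in H -> ~~ ([set x; y] \subset F)).

Definition C2 (V : finType) (H : {set {set V}}) :=
  forall B, basic_set H B -> forall x, x \notin B ->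
        exists y, (exists2 F, F \in H & y |: B \subset F) /\
                  (forall F, F \in H -> ~~ ([set x; y] \subset F)).

Lemma C1_basic (V : finType) (H : {set {set V}}) T : hypertree H -> host_tree H T ->
  C1 H T -> basic_hypertree H.
Proof.
move=> hh hT c1; apply/basicE => // S hS.
have trS : is_tree S := hS.1.
have trT : is_tree T := hT.1.
have ccN : forall y, cc S (Nset H y) by move=> y; apply: conn_cc trS (hS.2 _ (Nhyp_mem H y)).
split=> // F FH; apply: (cc_conn trS).
have cov : cover (PX T H F) = F by apply: PX_cover => u v _ uF vF; apply: IH_sub.
rewrite -cov; apply: (cover_cc trS (PX_conn (H := H) (tree_sym trT) (hT.2 F FH))).
move=> A /PXP [[u [v [Tuv uF vF ->]]] | [z zF ->]]; last by apply: cc_small trS _; rewrite cards1.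
apply: LX trS ccN _ => a aI.
case: (c1 u v Tuv a aI) => y [[G GH sG] hno].
move: sG; rewrite sub3 => /and3P [uG vG yG].
exists y; split.
- apply: subset_trans (IH_sub GH uG vG) _; apply/subsetP => z zG; apply/NsetP.
  by exists G => //; rewrite yG.
- apply/NsetP => [[G' G'H /andP [yG' aG']]]; have := hno G' G'H.
  by rewrite sub2 aG' yG'.
Qed.

Lemma core (V : finType) (H : {set {set V}}) T u v x F0 : host_tree H T ->
  (forall S, host_tree (Nhyp H) S -> host_tree H S) -> T u v -> x \in side T u v ->
  F0 \in H -> u \in F0 -> v \in F0 -> x \notin F0 ->
  (forall y G, G \in H -> u \in G -> v \in G -> y \in G ->
     exists2 G', G' \in H & (x \in G') && (y \in G')) -> False.
Proof.
move=> hT bas Tuv xs F0H uF0 vF0 xF0 hyp.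
have trT : is_tree T := hT.1.
have trS := swap_tree trT Tuv xs.
have Tvu : T v u by rewrite (tree_sym trT).
have hN : host_tree (Nhyp H) (swap T u v x).
  split=> // A /NhypP [y ->]; apply: (swap_ind_conn trT Tuv xs).
  - apply: (cc_conn trT); apply: (N_cc trT) => F FH; exact: host_cc hT FH.
  - move=> /NsetP [G1 G1H /andP [yG1 uG1]] /NsetP [G2 G2H /andP [yG2 vG2]].
    apply/NsetP; case/orP: (side_part y trT Tuv) => ys.
    + have uG2 := host_cc hT G2H Tuv yG2 vG2 ys (side_refl T v u).
      case: (hyp y G2 G2H uG2 vG2 yG2) => G' G'H /andP [xG' yG'].
      by exists G' => //; rewrite yG' xG'.
    + have vG1 := host_cc hT G1H Tvu yG1 uG1 ys (side_refl T u v).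
      case: (hyp y G1 G1H uG1 vG1 yG1) => G' G'H /andP [xG' yG'].
      by exists G' => //; rewrite yG' xG'.
have := (bas _ hN).2 F0 F0H u v uF0 vF0.
by apply/negP; apply: swap_not_conn.
Qed.

Lemma basic_C1 (V : finType) (H : {set {set V}}) T : host_tree H T ->
  basic_hypertree H -> C1 H T.
Proof.
move=> hT bas u v Tuv x xI.
have bas' : forall S, host_tree (Nhyp H) S -> host_tree H S.
  by case: bas => _ eqv S hS; apply/eqv.
have trT : is_tree T := hT.1.
case: (IH_notin xI) => F0 F0H /and3P [uF0 vF0 xF0].
apply: NNPP => N.
have hyp : forall y G, G \in H -> u \in G -> v \in G -> y \in G ->
     exists2 G', G' \in H & (x \in G') && (y \in G').
  move=> y G GH uG vG yG; apply: NNPP => N2; apply: N; exists y; split.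
  - by exists G => //; rewrite sub3 uG vG yG.
  - move=> G' G'H; rewrite sub2; apply/negP => h; apply: N2; by exists G'.
case/orP: (side_part x trT Tuv) => xs.
- exact: (core hT bas' Tuv xs F0H uF0 vF0 xF0 hyp).
- have Tvu : T v u by rewrite (tree_sym trT).
  apply: (core hT bas' Tvu xs F0H vF0 uF0 xF0) => y G GH vG uG yG.
  exact: (hyp y G GH uG vG yG).
Qed.

Lemma C2_basic (V : finType) (H : {set {set V}}) : hypertree H -> C2 H -> basic_hypertree H.
Proof.
move=> hh c2; apply/basicE => // S hS.
have trS : is_tree S := hS.1.
have ccN : forall y, cc S (Nset H y) by move=> y; apply: conn_cc trS (hS.2 _ (Nhyp_mem H y)).
have key : forall n (X : {set V}), #|X| <= n -> comp_edge H X -> cc S X.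
  elim=> [|n IHn] X Xn cX.
    by apply: cc_small trS _; apply: leq_trans Xn _.
  case: (leqP #|X| 1) => X1; first exact: cc_small.
  case: (classic (basic_set H X)) => bX.
  - case: (cX) => [-> | [X1' | [pX oX]]]; first exact: cc_setT.
      by rewrite X1' in X1.
    apply: LX trS ccN _ => a aX.
    case: (c2 X bX a aX) => y [[G GH sG] hno].
    move: sG; rewrite subUset sub1set => /andP [yG XG].
    exists y; split.
    + apply/subsetP => z zX; apply/NsetP; exists G => //; by rewrite yG (subsetP XG z zX).
    + apply/NsetP => [[G' G'H /andP [yG' aG']]]; have := hno G' G'H.
      by rewrite sub2 aG' yG'.
  - have [P [P0 fc cov hP]] : exists P : {set {set V}},
       [/\ P != set0, family_connected P, cover P = X &
           forall A, A \in P -> comp_edge H A /\ A \proper X].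
      by apply: NNPP => N; apply: bX; split => //; split.
    rewrite -cov; apply: (cover_cc trS fc) => A AP.
    case: (hP A AP) => cA pA; apply: IHn cA.
    by rewrite -ltnS; apply: leq_trans (proper_card pA) Xn.
split=> // F FH; apply: (cc_conn trS).
case: (boolP (F == [set: V])) => [/eqP -> | nT]; first exact: cc_setT.
apply: (key #|F|) => //; right; right; split; [by rewrite properT | exact: obt_edge].
Qed.

Lemma OBT (V : finType) (H : {set {set V}}) T X : host_tree H T -> obtainable H X ->
  cc T X /\ (forall u v, T u v -> u \in X -> v \in X -> IH H [set u; v] \subset X).
Proof.
move=> hT; have trT : is_tree T := hT.1.
elim=> [F FH | A B _ [ccA sA] _ [ccB sB] nAB | P P0 _ IHP fc].
- by split; [apply: host_cc hT FH | move=> u v _ uF vF; apply: IH_sub].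
- split; first exact: cc_setI.
  by move=> u v Tuv /setIP [uA uB] /setIP [vA vB]; rewrite subsetI sA ?sB.
- have ccP : forall A, A \in P -> cc T A by move=> A AP; case: (IHP A AP).
  split; first exact: cover_cc trT fc ccP.
  move=> u v Tuv uC vC.
  case: (fam_cc trT fc ccP Tuv uC vC (side_refl T u v) (side_refl T v u)) => Z ZP /andP [uZ vZ].
  apply: subset_trans ((IHP Z ZP).2 u v Tuv uZ vZ) _.
  by apply/subsetP => z zZ; apply/bigcupP; exists Z.
Qed.

Lemma basic_C2 (V : finType) (H : {set {set V}}) T : host_tree H T ->
  basic_hypertree H -> C2 H.
Proof.
move=> hT bas; have c1 := basic_C1 hT bas; have trT : is_tree T := hT.1.
move=> B [cB [B1 nP]] x xB.
have [pB oB] : B \proper [set: V] /\ obtainable H B.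
  case: cB => [eT | [B1' | h]] //; first by rewrite eT inE in xB.
  by rewrite B1' in B1.
have [ccB sB] := OBT hT oB.
have cBT := cc_conn trT ccB.
have [u [v [Tuv uB vB BI]]] : exists u v, [/\ T u v, u \in B, v \in B & B \subset IH H [set u; v]].
  apply: NNPP => N; apply: nP; exists (PX T H B); split.
  - have [z zB] : exists z, z \in B.
      by apply/set0Pn; rewrite -card_gt0; apply: ltn_trans B1.
    by apply/set0Pn; exists [set z]; apply: PX_sing.
  - exact: (PX_conn (H := H) (tree_sym trT) cBT).
  - exact: PX_cover sB.
  - move=> A /PXP [[u [v [Tuv uB vB ->]]] | [z zB ->]].
    + have pI : IH H [set u; v] \proper B.
        rewrite properE sB //=; apply/negP => h; apply: N; by exists u, v.
      split => //; right; right; split; first exact: proper_sub_trans pI (proper_sub pB).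
      by apply: IH_obt; apply: proper_sub_trans pI (proper_sub pB).
    + split; first by right; left; rewrite cards1.
      by rewrite properEcard sub1set zB cards1.
have eB : B = IH H [set u; v] by apply/eqP; rewrite eqEsubset BI sB.
rewrite eB in xB; case: (c1 u v Tuv x xB) => y [[G GH sG] hno].
exists y; split => //; exists G => //.
move: sG; rewrite sub3 subUset sub1set => /and3P [uG vG ->] /=.
by rewrite eB; apply: IH_sub.
Qed.

Theorem mainTheorem8 (V : finType) (H : {set {set V}})
  (H_nonempty : forall F, F \in H -> F != set0)
  (H_hyper : hypertree H) (T : rel V) (HT : host_tree H T) :
  (basic_hypertree H <->
     (forall u v, T u v -> forall x, x \notin IH H [set u; v] ->
        exists y, (exists2 F, F \in H & [set u; v; y] \subset F) /\
                  (forall F, F \in H -> ~~ ([set x; y] \subset F))))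
  /\
  (basic_hypertree H <->
     (forall B, basic_set H B -> forall x, x \notin B ->
        exists y, (exists2 F, F \in H & y |: B \subset F) /\
                  (forall F, F \in H -> ~~ ([set x; y] \subset F)))).
Proof.
split; split.
- exact: basic_C1 HT.
- exact: C1_basic H_hyper HT.
- exact: basic_C2 HT.
- exact: C2_basic H_hyper.
Qed.
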